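(* Let $(p,q)\in(\mathcal{H}\times\mathcal{H})\setminus\Delta$. Then, for any horizontal vectors $v\in H_p$ and $v'\in H_q$, we have \begin{equation} |\Omega_{\mathcal{H}}(v,v')|=2\cdot\frac{|v|\,|v'|}{d_{\mathcal{H}}(p,q)^2}. \end{equation} Moreover, if $K$ is a Legendrian knot passing through $p$, $q$ and $v$ and $v'$ are tangent to $K$, then the absolute value of the argument of $\Omega_{\mathcal{H}}(v,v')$ equals $\theta_K(p,q)$.
   Context: $\mathcal{H}=\mathbb{C}\times\mathbb{R}$ is the 3-dimensional Heisenberg group with coordinates $(z,u)=(x,y,u)$, group law $(z,u)\cdot(z',u')=(z+z',u+u'-\tfrac{1}{2}\Im(z\overline{z'}))$, horizontal distribution $H$ spanned by $X=\partial_x-\tfrac12 y\,\partial_u$, $Y=\partial_y+\tfrac12 x\,\partial_u$ (orthonormal, norm $|\cdot|$). The Korányi distance is $d_{\mathcal{H}}(p,q)=\|p^{-1}q\|_{\mathcal{H}}$, $\|(x,y,u)\|_{\mathcal{H}}=\sqrt[4]{(x^2+y^2)^2+16u^2}$; $\Delta$ is the diagonal. For $p=(z,u)$ let $A(p)=|z|^2-4iu$, and $\rho(p,q)=A(p^{-1}q)$. The complex 2-form on $(\mathcal{H}\times\mathcal{H})\setminus\Delta$ is $\Omega_{\mathcal{H}}=d_pd_q\log\rho$ (exterior derivatives in the first and second factors). For a Legendrian knot $K$ (smooth embedded closed Legendrian curve) and distinct $p,q\in K$, $\Gamma_K(p,q)$ is the unique $\mathbb{R}$-circle (boundary of a totally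 geodesic totally real surface in the complex hyperbolic ball, with $\partial B^2_{\mathbb{C}}\cong\mathcal{H}\cup\{\infty\}$) through $p$ and $q$ tangent to $K$ at $p$, and $\theta_K(p,q)\in[0,\pi]$ is the angle between $\Gamma_K(p,q)$ and $\Gamma_K(q,p)$, with orientations induced by an orientation of $K$. *)

(* Defs.v *)
From Stdlib Require Import Reals.
From Coquelicot Require Import Coquelicot.
Open Scope R_scope.

(** Points of the Heisenberg group H = C x R, in coordinates (x,y,u),
    and (Euclidean) coordinate vectors of R^3 (used for tangent vectors). *)
Record R3 := mkR3 { cx : R; cy : R; cu : R }.
Definition Hpt := R3.

(** Group law (z,u).(z',u') = (z+z', u+u' - 1/2 Im(z conj z')),
    with Im(z conj z') = y x' - x y'. *)
Definition Hmul (p q : Hpt) : Hpt :=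
  mkR3 (cx p + cx q) (cy p + cy q)
       (cu p + cu q - / 2 * (cy p * cx q - cx p * cy q)).
Definition Hinv (p : Hpt) : Hpt := mkR3 (- cx p) (- cy p) (- cu p).

Definition Hnorm (p : Hpt) : R :=
  sqrt (sqrt ((cx p ^ 2 + cy p ^ 2) ^ 2 + 16 * cu p ^ 2)).
Definition dH (p q : Hpt) : R := Hnorm (Hmul (Hinv p) q).

Definition Afun (p : Hpt) : Complex.C := (cx p ^ 2 + cy p ^ 2, - 4 * cu p).
Definition rhoH (p q : Hpt) : Complex.C := Afun (Hmul (Hinv p) q).

(** Horizontal vector a X_p + b Y_p, where X = d_x - y/2 d_u, Y = d_y + x/2 d_u;
    its norm (X,Y orthonormal) is sqrt(a^2+b^2). *)
Definition hvec (p : Hpt) (a b : R) : R3 :=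
  mkR3 a b (/ 2 * (- cy p * a + cx p * b)).
Definition hnorm2 (a b : R) : R := sqrt (a ^ 2 + b ^ 2).

Definition padd (p : Hpt) (v : R3) (s : R) : Hpt :=
  mkR3 (cx p + s * cx v) (cy p + s * cy v) (cu p + s * cu v).

Definition dC (f : R -> Complex.C) (t : R) : Complex.C :=
  (Derive (fun s => Re (f s)) t, Derive (fun s => Im (f s)) t).

(** Omega_H = d_p d_q log rho, evaluated on (v, v') with v in T_p H, v' in T_q H:
    d_q log rho = (d_q rho) / rho (independent of the branch of log), then
    differentiate in p in the direction v:
      Omega(v,v') = d/ds|_0 [ (d/dt|_0 rho(p+sv, q+tv')) / rho(p+sv, q) ]. *)
Definition OmegaH (p q : Hpt) (v v' : R3) : Complex.C :=
  dC (fun s => Cdiv (dC (fun t => rhoH (padd p v s) (padd q v' t)) 0)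
                    (rhoH (padd p v s) q)) 0.

(** |arg w| in [0, pi] for w <> 0. *)
Definition abs_arg (w : Complex.C) : R := acos (Re w / Cmod w).

Definition smooth (f : R -> R) : Prop := forall (n : nat) (t : R), ex_derive_n f n t.
Definition smooth_curve (g : R -> R3) : Prop :=
  smooth (fun t => cx (g t)) /\ smooth (fun t => cy (g t)) /\ smooth (fun t => cu (g t)).
Definition velocity (g : R -> R3) (t : R) : R3 :=
  mkR3 (Derive (fun s => cx (g s)) t) (Derive (fun s => cy (g s)) t)
       (Derive (fun s => cu (g s)) t).
Definition nonzero3 (w : R3) : Prop := ~ (cx w = 0 /\ cy w = 0 /\ cu w = 0).
Definition scale3 (l : R) (w : R3) : R3 := mkR3 (l * cx w) (l * cy w) (l * cu w).

(** Horizontality of a tangent vector w at p: w in span(X_p, Y_p),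
    i.e.  w_u = 1/2 (x w_y - y w_x). *)
Definition horizontal_at (p : Hpt) (w : R3) : Prop :=
  cu w = / 2 * (cx p * cy w - cy p * cx w).

(** A Legendrian knot: a smooth, regular, horizontal, closed, simple curve,
    parametrised by a T-periodic map gamma injective on [0,T);
    its orientation is the one given by the parametrisation. *)
Definition legendrian_knot (gamma : R -> Hpt) (T : R) : Prop :=
  0 < T /\
  smooth_curve gamma /\
  (forall t, gamma (t + T) = gamma t) /\
  (forall s t, 0 <= s < T -> 0 <= t < T -> gamma s = gamma t -> s = t) /\
  (forall t, nonzero3 (velocity gamma t)) /\
  (forall t, horizontal_at (gamma t) (velocity gamma t)).

(** Complex hyperbolic plane: C^3 with the Hermitian form
      h(X,Y) = X1 conj(Y3) + X3 conj(Y1) - 2 X2 conj(Y2)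
    (the ball is the set of lines of h-positive vectors); the boundary is the set
    of h-null lines, identified with H u {oo} via the lift
      psi(z,u) = (|z|^2 + 4 i u, z, 1),   oo = [1:0:0]. *)
Record C3 := mkC3 { c1 : Complex.C; c2 : Complex.C; c3 : Complex.C }.
Definition hform (X Y : C3) : Complex.C :=
  Cplus (Cplus (Cmult (c1 X) (Cconj (c3 Y))) (Cmult (c3 X) (Cconj (c1 Y))))
        (Cmult (RtoC (-2)) (Cmult (c2 X) (Cconj (c2 Y)))).
Definition lift (p : Hpt) : C3 :=
  mkC3 (cx p ^ 2 + cy p ^ 2, 4 * cu p) (cx p, cy p) (RtoC 1).
Definition det3 (a b c : C3) : Complex.C :=
  (Cplus (Cplus (Cmult (c1 a) (Cminus (Cmult (c2 b) (c3 c)) (Cmult (c3 b) (c2 c))))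
                       (Cmult (c1 b) (Cminus (Cmult (c2 c) (c3 a)) (Cmult (c3 c) (c2 a)))))
                (Cmult (c1 c) (Cminus (Cmult (c2 a) (c3 b)) (Cmult (c3 a) (c2 b))))).
Definition cscale (l : Complex.C) (X : C3) : C3 :=
  mkC3 (Cmult l (c1 X)) (Cmult l (c2 X)) (Cmult l (c3 X)).
Definition in_Rspan (e1 e2 e3 X : C3) : Prop :=
  exists r1 r2 r3 : R,
    X = mkC3 (Cplus (Cplus (Cmult (RtoC r1) (c1 e1)) (Cmult (RtoC r2) (c1 e2))) (Cmult (RtoC r3) (c1 e3)))
             (Cplus (Cplus (Cmult (RtoC r1) (c2 e1)) (Cmult (RtoC r2) (c2 e2))) (Cmult (RtoC r3) (c2 e3)))
             (Cplus (Cplus (Cmult (RtoC r1) (c3 e1)) (Cmult (RtoC r2) (c3 e2))) (Cmult (RtoC r3) (c3 e3))).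

(** A totally geodesic totally real surface of the ball is the projectivisation of
    a real 3-dimensional subspace V = span_R(e1,e2,e3) of C^3 with V (x) C = C^3
    (e1,e2,e3 C-linearly independent) on which h is real-valued.  Its boundary
    R-circle consists of the null lines of V.  [RcircleH S] says that S is the
    finite part (the part in H) of such an R-circle. *)
Definition RcircleH (S : Hpt -> Prop) : Prop :=
  exists e1 e2 e3 : C3,
    det3 e1 e2 e3 <> RtoC 0 /\
    (forall X Y, (X = e1 \/ X = e2 \/ X = e3) -> (Y = e1 \/ Y = e2 \/ Y = e3) ->
                 Im (hform X Y) = 0) /\
    (forall p, S p <-> exists l : Complex.C, l <> RtoC 0 /\ in_Rspan e1 e2 e3 (cscale l (lift p))).

(** A regular smooth parametrisation (possibly non-injective, e.g. periodic) of a
    piece of S; it determines an orientation of the curve S. *)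
Definition oriented_param (S : Hpt -> Prop) (c : R -> Hpt) : Prop :=
  smooth_curve c /\ (forall t, nonzero3 (velocity c t)) /\ (forall t, S (c t)).

(** Horizontal inner product and angle between horizontal vectors at a point:
    for horizontal w, w = w_x X + w_y Y, and X, Y are orthonormal. *)
Definition hinner (w w' : R3) : R := cx w * cx w' + cy w * cy w'.
Definition hangle (w w' : R3) : R :=
  acos (hinner w w' / (sqrt (hinner w w) * sqrt (hinner w' w'))).

(* Main.v *)
Require Import Defs.
From Stdlib Require Import Reals Lra Psatz.
From Coquelicot Require Import Coquelicot.
Open Scope R_scope.

Lemma isd_eq (f : R -> R) (x l l' : R) : is_derive f x l -> l = l' -> is_derive f x l'.
Proof. intros H ->; exact H. Qed.

Lemma isd_mult (f g : R -> R) (x a b : R) : is_derive f x a -> is_derive g x b ->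
  is_derive (fun t => f t * g t) x (a * g x + f x * b).
Proof. intros Hf Hg. eapply isd_eq. apply (is_derive_mult f g x a b Hf Hg).
  intros; apply Rmult_comm. reflexivity. Qed.
Lemma isd_plus (f g : R -> R) x a b : is_derive f x a -> is_derive g x b ->
  is_derive (fun t => f t + g t) x (a + b).
Proof. intros Hf Hg. apply (is_derive_plus f g x a b Hf Hg). Qed.
Lemma isd_minus (f g : R -> R) x a b : is_derive f x a -> is_derive g x b ->
  is_derive (fun t => f t - g t) x (a - b).
Proof. intros Hf Hg. apply (is_derive_minus f g x a b Hf Hg). Qed.
Lemma isd_opp (f : R -> R) x a : is_derive f x a ->
  is_derive (fun t => - f t) x (- a).
Proof. intros Hf. apply (is_derive_opp f x a Hf). Qed.
Lemma isd_const (c : R) x : is_derive (fun _ => c) x 0.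
Proof. apply (is_derive_const (K:=R_AbsRing) (V:=R_NormedModule) c x). Qed.
Lemma isd_inv (f : R -> R) (x a : R) : is_derive f x a -> f x <> 0 ->
  is_derive (fun t => / f t) x (- a / (f x * f x)).
Proof. intros Hf Hn. eapply isd_eq. apply (is_derive_inv f x a Hf Hn).
  simpl. unfold scal; simpl. unfold mult; simpl. field. auto. Qed.

Lemma isd_sq (f : R -> R) (x a : R) : is_derive f x a -> is_derive (fun t => f t ^ 2) x (2 * f x * a).
Proof. intros H. eapply isd_eq.
  apply is_derive_ext with (fun t => f t * f t). intros t; change (f t * f t = f t ^ 2); ring.
  apply isd_mult; eauto. ring. Qed.

Definition cd (f : R -> Complex.C) (t : R) (z : Complex.C) : Prop :=
  is_derive (fun s => fst (f s)) t (fst z) /\ is_derive (fun s => snd (f s)) t (snd z).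

Lemma cd_eq f t z z' : cd f t z -> z = z' -> cd f t z'.
Proof. intros H ->; exact H. Qed.
Lemma cd_ext f g t z : (forall s, f s = g s) -> cd f t z -> cd g t z.
Proof. intros E [H1 H2]; split; eapply is_derive_ext; try eassumption; intros s; simpl; rewrite E; auto. Qed.
Lemma cd_const (c : Complex.C) t : cd (fun _ => c) t (RtoC 0).
Proof. split; simpl; apply isd_const. Qed.
Lemma cd_plus f g t a b : cd f t a -> cd g t b -> cd (fun s => Cplus (f s) (g s)) t (Cplus a b).
Proof. intros [H1 H2] [H3 H4]; split; simpl; apply isd_plus; auto. Qed.
Lemma cd_minus f g t a b : cd f t a -> cd g t b -> cd (fun s => Cminus (f s) (g s)) t (Cminus a b).
Proof. intros [H1 H2] [H3 H4]; split; simpl; apply isd_plus; auto; apply isd_opp; auto. Qed.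
Lemma cd_opp f t a : cd f t a -> cd (fun s => Copp (f s)) t (Copp a).
Proof. intros [H1 H2]; split; simpl; apply isd_opp; auto. Qed.
Lemma cd_mult f g t a b : cd f t a -> cd g t b ->
  cd (fun s => Cmult (f s) (g s)) t (Cplus (Cmult a (g t)) (Cmult (f t) b)).
Proof. intros [H1 H2] [H3 H4]; split.
  { simpl. eapply isd_eq. apply isd_minus; apply isd_mult; eauto. simpl; cbv beta; ring. }
  { simpl. eapply isd_eq. apply isd_plus; apply isd_mult; eauto. simpl; cbv beta; ring. } Qed.
Lemma cd_conj f t a : cd f t a -> cd (fun s => Cconj (f s)) t (Cconj a).
Proof. intros [H1 H2]; split; simpl; [exact H1 | apply isd_opp; exact H2]. Qed.
Lemma cd_RtoC (f : R -> R) t a : is_derive f t a -> cd (fun s => RtoC (f s)) t (RtoC a).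
Proof. intros H; split; simpl; auto; apply isd_const. Qed.
Lemma cd_pair (f g : R -> R) t a b : is_derive f t a -> is_derive g t b -> cd (fun s => (f s, g s)) t (a, b).
Proof. intros; split; simpl; auto. Qed.

Lemma C_neq0 (z : Complex.C) : z <> RtoC 0 -> fst z ^ 2 + snd z ^ 2 <> 0.
Proof. intros H E. apply H. destruct z as [a b]; simpl in *.
  assert (a = 0) by nra. assert (b = 0) by nra. subst. reflexivity. Qed.

Lemma cd_inv f t a : cd f t a -> f t <> RtoC 0 ->
  cd (fun s => Cinv (f s)) t (Copp (Cdiv a (Cmult (f t) (f t)))).
Proof. intros [H1 H2] Hn. pose proof (C_neq0 _ Hn) as Hn'.
  assert (HD : is_derive (fun s => fst (f s) ^ 2 + snd (f s) ^ 2) t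
     (2 * fst (f t) * fst a + 2 * snd (f t) * snd a)).
  { apply isd_plus; apply isd_sq; eauto. }
  split.
  { simpl. eapply isd_eq. apply isd_mult. eauto. apply isd_inv. apply HD. auto.
    cbv beta. destruct (f t) as [u v]; destruct a as [a1 a2]; simpl in *. field.
    split; [|nra]. intro E. apply Hn'. nra. }
  { simpl. eapply isd_eq. apply isd_mult. apply isd_opp; eauto. apply isd_inv. apply HD. auto.
    cbv beta. destruct (f t) as [u v]; destruct a as [a1 a2]; simpl in *. field.
    split; [|nra]. intro E. apply Hn'. nra. }
Qed.

Lemma cd_div f g t a b : cd f t a -> cd g t b -> g t <> RtoC 0 ->
  cd (fun s => Cdiv (f s) (g s)) t
    (Cplus (Cmult a (Cinv (g t))) (Cmult (f t) (Copp (Cdiv b (Cmult (g t) (g t)))))).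
Proof. intros Hf Hg Hn. unfold Cdiv at 1. apply (cd_mult f (fun s => Cinv (g s))); auto.
  apply cd_inv; auto. Qed.

Lemma cd_dC f t a : cd f t a -> dC f t = a.
Proof. intros [H1 H2]. unfold dC.
  assert (E1 : Derive (fun s => Re (f s)) t = fst a) by (apply is_derive_unique; exact H1).
  assert (E2 : Derive (fun s => Im (f s)) t = snd a) by (apply is_derive_unique; exact H2).
  rewrite E1, E2. destruct a; reflexivity. Qed.

Lemma cd_cont f t a : cd f t a -> continuous (fun s => fst (f s)) t.
Proof. intros [H1 _]. apply (ex_derive_continuous (K:=R_AbsRing) (V:=R_NormedModule)). eexists; eauto. Qed.

Definition D2 (P q w : R3) : Complex.C :=
  (2*(cx q - cx P)*cx w + 2*(cy q - cy P)*cy w,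
   -4*(cu w - /2*(- cy P * cx w + cx P * cy w))).
Definition D1 (P q v : R3) : Complex.C :=
  (-2*(cx q - cx P)*cx v - 2*(cy q - cy P)*cy v,
   -4*(- cu v - /2*(- cy v * cx q + cx v * cy q))).
Definition D12 (v w : R3) : Complex.C :=
  (-2*cx v*cx w - 2*cy v*cy w, 2*(- cy v * cx w + cx v * cy w)).

Lemma rho_d2 P q w : cd (fun t => rhoH P (padd q w t)) 0 (D2 P q w).
Proof. split; unfold rhoH, Afun, Hmul, Hinv, padd, D2; simpl; auto_derive; auto; field. Qed.

Lemma rho_d1 p q v : cd (fun s => rhoH (padd p v s) q) 0 (D1 p q v).
Proof. split; unfold rhoH, Afun, Hmul, Hinv, padd, D1; simpl; auto_derive; auto; field. Qed.

Lemma D2_d p q v w : cd (fun s => D2 (padd p v s) q w) 0 (D12 v w).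
Proof. split; unfold D2, padd, D12; simpl; auto_derive; auto; field. Qed.

Lemma padd0 p v : padd p v 0 = p.
Proof. destruct p; unfold padd; simpl; f_equal; ring. Qed.

Lemma sum_sq0 a b : a * a + b * b = 0 -> a = 0 /\ b = 0.
Proof. intros H. pose proof (Rle_0_sqr a). pose proof (Rle_0_sqr b). unfold Rsqr in *.
  assert (a * a = 0) by lra. assert (b * b = 0) by lra.
  apply Rmult_integral in H2. apply Rmult_integral in H3. intuition. Qed.

Lemma rho_eq0 p q : rhoH p q = RtoC 0 -> p = q.
Proof. destruct p as [x y u], q as [X Y U]. unfold rhoH, Afun, Hmul, Hinv, RtoC; simpl.
  intros E. injection E; intros E2 E1. rewrite !Rmult_1_r in E1.
  apply sum_sq0 in E1. destruct E1 as [A1 A2].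
  assert (X = x) by lra. assert (Y = y) by lra. subst.
  f_equal. lra. Qed.

Definition Omf (p q : Hpt) (a b a' b' : R) : Complex.C :=
  Cdiv (Cmult (RtoC 2) (Cmult (Cmult (a, b) (Cconj (a', b'))) (Cconj (rhoH p q))))
       (Cmult (rhoH p q) (rhoH p q)).

Lemma Omega_formula p q a b a' b' : p <> q ->
  OmegaH p q (hvec p a b) (hvec q a' b') = Omf p q a b a' b'.
Proof. intros Hpq. unfold OmegaH.
  assert (Hr : rhoH p q <> RtoC 0) by (intro E; apply Hpq, rho_eq0, E).
  rewrite (cd_dC _ _ (Cplus (Cmult (D12 (hvec p a b) (hvec q a' b')) (Cinv (rhoH p q)))
     (Cmult (D2 p q (hvec q a' b')) (Copp (Cdiv (D1 p q (hvec p a b)) (Cmult (rhoH p q) (rhoH p q))))))).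
  2:{ apply cd_ext with (f := fun s => Cdiv (D2 (padd p (hvec p a b) s) q (hvec q a' b'))
                                  (rhoH (padd p (hvec p a b) s) q)).
      { intros s. rewrite (cd_dC _ _ _ (rho_d2 _ _ _)). reflexivity. }
      eapply cd_eq. apply cd_div. apply D2_d. apply rho_d1. cbv beta; rewrite padd0; auto.
      cbv beta; rewrite !padd0; reflexivity. }
  unfold Omf.
  transitivity (Cdiv (Cminus (Cmult (D12 (hvec p a b) (hvec q a' b')) (rhoH p q))
                    (Cmult (D2 p q (hvec q a' b')) (D1 p q (hvec p a b)))) (Cmult (rhoH p q) (rhoH p q))).
  { field. auto. }
  f_equal. destruct p as [x y u], q as [X Y U].
  unfold D12, D2, D1, hvec, rhoH, Afun, Hmul, Hinv; simpl.
  unfold Cminus, Cmult, Cplus, Copp, Cconj, RtoC; simpl. f_equal; field.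
Qed.

Lemma Cmod_rho_dH p q : Cmod (rhoH p q) = dH p q ^ 2.
Proof. unfold dH, Hnorm, Cmod, rhoH, Afun.
  rewrite pow2_sqrt. 2: apply sqrt_pos. simpl. f_equal. ring. Qed.

Lemma part1 (p q : Hpt) (a b a' b' : R) : p <> q ->
     Cmod (OmegaH p q (hvec p a b) (hvec q a' b'))
     = 2 * (hnorm2 a b * hnorm2 a' b') / (dH p q ^ 2).
Proof. intros Hpq. rewrite Omega_formula by auto.
  assert (Hr : rhoH p q <> RtoC 0) by (intro E; apply Hpq, rho_eq0, E).
  assert (Hm : Cmod (rhoH p q) <> 0) by (intro E; apply Hr, Cmod_eq_0, E).
  unfold Omf. rewrite Cmod_div by (apply Cmult_neq_0; auto).
  rewrite !Cmod_mult, Cmod_conj, Cmod_conj, <- Cmod_rho_dH.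
  rewrite Cmod_R, Rabs_pos_eq by lra.
  unfold hnorm2, Cmod; simpl. field. exact Hm. Qed.

Ltac dc3 X := let a := fresh "a" in let b := fresh "b" in let c := fresh "c" in
  let d := fresh "d" in let e := fresh "e" in let f := fresh "f" in
  destruct X as [[a b] [c d] [e f]].

Definition comb (e1 e2 e3 : C3) (r1 r2 r3 : R) : C3 :=
  mkC3 (Cplus (Cplus (Cmult (RtoC r1) (Defs.c1 e1)) (Cmult (RtoC r2) (Defs.c1 e2))) (Cmult (RtoC r3) (Defs.c1 e3)))
       (Cplus (Cplus (Cmult (RtoC r1) (Defs.c2 e1)) (Cmult (RtoC r2) (Defs.c2 e2))) (Cmult (RtoC r3) (Defs.c2 e3)))
       (Cplus (Cplus (Cmult (RtoC r1) (Defs.c3 e1)) (Cmult (RtoC r2) (Defs.c3 e2))) (Cmult (RtoC r3) (Defs.c3 e3))).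

Lemma in_Rspan_comb e1 e2 e3 X : in_Rspan e1 e2 e3 X <-> exists r1 r2 r3, X = comb e1 e2 e3 r1 r2 r3.
Proof. reflexivity. Qed.

Definition dlift (p : Hpt) (w : R3) : C3 :=
  mkC3 (2 * cx p * cx w + 2 * cy p * cy w, 4 * cu w) (cx w, cy w) (RtoC 0).

Lemma hform_lift_self p : hform (lift p) (lift p) = RtoC 0.
Proof. destruct p as [x y u]. unfold hform, lift, RtoC, Cplus, Cmult, Cconj; simpl. f_equal; ring. Qed.

Lemma hl_rho a b : hform (lift a) (lift b) = rhoH a b.
Proof. destruct a as [x y u], b as [X Y U]. unfold hform, lift, rhoH, Afun, Hmul, Hinv, RtoC, Cplus, Cmult, Cconj; simpl.
  f_equal; field. Qed.

Lemma hform_conj X Y : hform Y X = Cconj (hform X Y).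
Proof. dc3 X; dc3 Y. unfold hform, RtoC, Cplus, Cmult, Cconj; simpl. f_equal; ring. Qed.

Lemma hform_scale a b X Y : hform (cscale a X) (cscale b Y) = Cmult (Cmult a (Cconj b)) (hform X Y).
Proof. destruct a, b; dc3 X; dc3 Y. unfold hform, cscale, RtoC, Cplus, Cmult, Cconj; simpl. f_equal; ring. Qed.

Lemma hform_comb_im e1 e2 e3 r1 r2 r3 s1 s2 s3 :
  Im (hform (comb e1 e2 e3 r1 r2 r3) (comb e1 e2 e3 s1 s2 s3)) =
  r1*s1*Im (hform e1 e1) + r1*s2*Im (hform e1 e2) + r1*s3*Im (hform e1 e3) +
  r2*s1*Im (hform e2 e1) + r2*s2*Im (hform e2 e2) + r2*s3*Im (hform e2 e3) +
  r3*s1*Im (hform e3 e1) + r3*s2*Im (hform e3 e2) + r3*s3*Im (hform e3 e3).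
Proof. dc3 e1; dc3 e2; dc3 e3. unfold hform, comb, Im, RtoC, Cplus, Cmult, Cconj; simpl. ring. Qed.

Lemma hform_comb_add X e1 e2 e3 r1 r2 r3 s1 s2 s3 k :
  hform X (comb e1 e2 e3 (r1 + k * s1) (r2 + k * s2) (r3 + k * s3)) =
  Cplus (hform X (comb e1 e2 e3 r1 r2 r3)) (Cmult (RtoC k) (hform X (comb e1 e2 e3 s1 s2 s3))).
Proof. dc3 X; dc3 e1; dc3 e2; dc3 e3. unfold hform, comb, RtoC, Cplus, Cmult, Cconj; simpl. f_equal; ring. Qed.

Definition rv (r1 r2 r3 : R) : C3 := mkC3 (RtoC r1) (RtoC r2) (RtoC r3).

Lemma det_comb e1 e2 e3 r1 r2 r3 s1 s2 s3 n1 n2 n3 :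
  det3 (comb e1 e2 e3 r1 r2 r3) (comb e1 e2 e3 s1 s2 s3) (comb e1 e2 e3 n1 n2 n3) =
  Cmult (det3 (rv r1 s1 n1) (rv r2 s2 n2) (rv r3 s3 n3)) (det3 e1 e2 e3).
Proof. destruct e1 as [a1 a2 a3], e2 as [b1 b2 b3], e3 as [d1 d2 d3].
  unfold det3, comb, rv; simpl. ring. Qed.

Lemma det_rv_real a b c d e f g h i : det3 (rv a b c) (rv d e f) (rv g h i) = RtoC (
  a * (e * i - f * h) + d * (h * c - i * b) + g * (b * f - c * e)).
Proof. unfold det3, rv, RtoC, Cplus, Cmult, Cminus, Copp; simpl. f_equal; ring. Qed.

Lemma cramer e1 e2 e3 W :
  Cmult (det3 e1 e2 e3) (Defs.c1 W) = Cplus (Cplus (Cmult (det3 W e2 e3) (Defs.c1 e1)) (Cmult (det3 e1 W e3) (Defs.c1 e2))) (Cmult (det3 e1 e2 W) (Defs.c1 e3)) /\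
  Cmult (det3 e1 e2 e3) (Defs.c2 W) = Cplus (Cplus (Cmult (det3 W e2 e3) (Defs.c2 e1)) (Cmult (det3 e1 W e3) (Defs.c2 e2))) (Cmult (det3 e1 e2 W) (Defs.c2 e3)) /\
  Cmult (det3 e1 e2 e3) (Defs.c3 W) = Cplus (Cplus (Cmult (det3 W e2 e3) (Defs.c3 e1)) (Cmult (det3 e1 W e3) (Defs.c3 e2))) (Cmult (det3 e1 e2 W) (Defs.c3 e3)).
Proof. destruct e1 as [a1 a2 a3], e2 as [b1 b2 b3], e3 as [d1 d2 d3], W as [w1 w2 w3].
  unfold det3; simpl. repeat split; ring. Qed.

Lemma cr_comb e1 e2 e3 r1 r2 r3 :
  det3 (comb e1 e2 e3 r1 r2 r3) e2 e3 = Cmult (RtoC r1) (det3 e1 e2 e3) /\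
  det3 e1 (comb e1 e2 e3 r1 r2 r3) e3 = Cmult (RtoC r2) (det3 e1 e2 e3) /\
  det3 e1 e2 (comb e1 e2 e3 r1 r2 r3) = Cmult (RtoC r3) (det3 e1 e2 e3).
Proof. destruct e1 as [a1 a2 a3], e2 as [b1 b2 b3], e3 as [d1 d2 d3].
  unfold det3, comb; simpl. repeat split; ring. Qed.

Lemma det_alt a b X W N :
  det3 (cscale a X) (mkC3 (Cplus (Cmult b (Defs.c1 X)) (Cmult a (Defs.c1 W)))
                           (Cplus (Cmult b (Defs.c2 X)) (Cmult a (Defs.c2 W)))
                           (Cplus (Cmult b (Defs.c3 X)) (Cmult a (Defs.c3 W)))) N =
  Cmult (Cmult a a) (det3 X W N).
Proof. destruct X as [x1 x2 x3], W as [w1 w2 w3], N as [n1 n2 n3].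
  unfold det3, cscale; simpl. ring. Qed.

Lemma hform_Y a b X W :
  hform (cscale a X) (mkC3 (Cplus (Cmult b (Defs.c1 X)) (Cmult a (Defs.c1 W)))
                           (Cplus (Cmult b (Defs.c2 X)) (Cmult a (Defs.c2 W)))
                           (Cplus (Cmult b (Defs.c3 X)) (Cmult a (Defs.c3 W)))) =
  Cplus (Cmult (Cmult a (Cconj b)) (hform X X)) (Cmult (Cmult a (Cconj a)) (hform X W)).
Proof. destruct a, b; dc3 X; dc3 W. unfold hform, cscale, RtoC, Cplus, Cmult, Cconj; simpl. f_equal; ring. Qed.

Lemma det_lift_dlift p w N : cu w = / 2 * (cx p * cy w - cy p * cx w) ->
  det3 (lift p) (dlift p w) N = Cmult (Copp (cx w, cy w)) (Cconj (hform (lift p) N)).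
Proof. intros H. destruct p as [x y u], w as [w1 w2 w3]; simpl in H; subst w3. dc3 N.
  unfold det3, hform, lift, dlift, RtoC, Cplus, Cmult, Cminus, Copp, Cconj; simpl. f_equal; field. Qed.

Lemma im_h_lift_dlift p w : Im (hform (lift p) (dlift p w)) = -4 * cu w + 2 * (cx p * cy w - cy p * cx w).
Proof. destruct p as [x y u], w as [w1 w2 w3].
  unfold hform, lift, dlift, RtoC, Cplus, Cmult, Cconj, Im; simpl. ring. Qed.

Lemma cartan a b c : Re (Cmult (Cmult (hform (lift a) (lift b)) (hform (lift b) (lift c))) (hform (lift c) (lift a)))
  = Re (det3 (lift a) (lift b) (lift c)) ^ 2 + Im (det3 (lift a) (lift b) (lift c)) ^ 2.
Proof. destruct a as [x y u], b as [X Y U], c as [x' y' u'].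
  unfold det3, hform, lift, RtoC, Cplus, Cmult, Cminus, Copp, Cconj, Re, Im; simpl. ring. Qed.

Definition cd3 (W : R -> C3) (t : R) (D : C3) : Prop :=
  cd (fun s => Defs.c1 (W s)) t (Defs.c1 D) /\ cd (fun s => Defs.c2 (W s)) t (Defs.c2 D) /\
  cd (fun s => Defs.c3 (W s)) t (Defs.c3 D).

Lemma lift_cd (c : R -> R3) t :
  ex_derive (fun s => cx (c s)) t -> ex_derive (fun s => cy (c s)) t -> ex_derive (fun s => cu (c s)) t ->
  cd3 (fun s => lift (c s)) t (dlift (c t) (velocity c t)).
Proof. intros Hx Hy Hu. apply Derive_correct in Hx, Hy, Hu.
  split; [|split]; [split | split | exact (cd_const (RtoC 1) t)].
  { change (is_derive (fun s => cx (c s) ^ 2 + cy (c s) ^ 2) t (2 * cx (c t) * Derive (fun s => cx (c s)) t + 2 * cy (c t) * Derive (fun s => cy (c s)) t)).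
    apply isd_plus; apply isd_sq; auto. }
  { change (is_derive (fun s => 4 * cu (c s)) t (4 * Derive (fun s => cu (c s)) t)).
    eapply isd_eq. apply isd_mult. apply isd_const. exact Hu. cbv beta. rewrite Rmult_0_l, Rplus_0_l. reflexivity. }
  { exact Hx. } { exact Hy. }
Qed.

Lemma cd_lin W t D k1 k2 k3 : cd3 W t D ->
  cd (fun s => Cplus (Cplus (Cmult (Defs.c1 (W s)) k1) (Cmult (Defs.c2 (W s)) k2)) (Cmult (Defs.c3 (W s)) k3)) t
     (Cplus (Cplus (Cmult (Defs.c1 D) k1) (Cmult (Defs.c2 D) k2)) (Cmult (Defs.c3 D) k3)).
Proof. intros [H1 [H2 H3]]. eapply cd_eq.
  apply cd_plus; [apply cd_plus|]; (apply cd_mult; [eauto | apply cd_const]).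
  cbv beta; ring. Qed.

Lemma cd_hform W t D N : cd3 W t D -> cd (fun s => hform (W s) N) t (hform D N).
Proof. intros H. eapply cd_ext. 2: eapply cd_eq. 2: apply (cd_lin W t D (Cconj (Defs.c3 N)) (Cmult (RtoC (-2)) (Cconj (Defs.c2 N))) (Cconj (Defs.c1 N)) H).
  intros s; unfold hform; cbv beta; ring. unfold hform; cbv beta; ring. Qed.

Lemma cd_det1 W t D e2 e3 : cd3 W t D -> cd (fun s => det3 (W s) e2 e3) t (det3 D e2 e3).
Proof. intros H. eapply cd_ext. 2: eapply cd_eq. 2: apply (cd_lin W t D
   (Cminus (Cmult (Defs.c2 e2) (Defs.c3 e3)) (Cmult (Defs.c3 e2) (Defs.c2 e3)))
   (Cminus (Cmult (Defs.c1 e3) (Defs.c3 e2)) (Cmult (Defs.c1 e2) (Defs.c3 e3)))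
   (Cminus (Cmult (Defs.c1 e2) (Defs.c2 e3)) (Cmult (Defs.c1 e3) (Defs.c2 e2))) H).
  intros s; unfold det3; cbv beta; ring. unfold det3; cbv beta; ring. Qed.

Lemma cd_det2 W t D e1 e3 : cd3 W t D -> cd (fun s => det3 e1 (W s) e3) t (det3 e1 D e3).
Proof. intros H. eapply cd_ext. 2: eapply cd_eq. 2: apply (cd_lin W t D
   (Cminus (Cmult (Defs.c2 e3) (Defs.c3 e1)) (Cmult (Defs.c3 e3) (Defs.c2 e1)))
   (Cminus (Cmult (Defs.c1 e1) (Defs.c3 e3)) (Cmult (Defs.c1 e3) (Defs.c3 e1)))
   (Cminus (Cmult (Defs.c1 e3) (Defs.c2 e1)) (Cmult (Defs.c1 e1) (Defs.c2 e3))) H).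
  intros s; unfold det3; cbv beta; ring. unfold det3; cbv beta; ring. Qed.

Lemma cd_det3 W t D e1 e2 : cd3 W t D -> cd (fun s => det3 e1 e2 (W s)) t (det3 e1 e2 D).
Proof. intros H. eapply cd_ext. 2: eapply cd_eq. 2: apply (cd_lin W t D
   (Cminus (Cmult (Defs.c2 e1) (Defs.c3 e2)) (Cmult (Defs.c3 e1) (Defs.c2 e2)))
   (Cminus (Cmult (Defs.c1 e2) (Defs.c3 e1)) (Cmult (Defs.c1 e1) (Defs.c3 e2)))
   (Cminus (Cmult (Defs.c1 e1) (Defs.c2 e2)) (Cmult (Defs.c1 e2) (Defs.c2 e1))) H).
  intros s; unfold det3; cbv beta; ring. unfold det3; cbv beta; ring. Qed.

Definition Ydot (a b : Complex.C) (X W : C3) : C3 :=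
  mkC3 (Cplus (Cmult b (Defs.c1 X)) (Cmult a (Defs.c1 W)))
       (Cplus (Cmult b (Defs.c2 X)) (Cmult a (Defs.c2 W)))
       (Cplus (Cmult b (Defs.c3 X)) (Cmult a (Defs.c3 W))).

Lemma cd_Y X t Xd f fd : cd3 X t Xd -> cd f t fd -> f t <> RtoC 0 ->
  cd3 (fun s => cscale (Cinv (f s)) (X s)) t
      (Ydot (Cinv (f t)) (Copp (Cdiv fd (Cmult (f t) (f t)))) (X t) Xd).
Proof. intros [H1 [H2 H3]] Hf Hn. pose proof (cd_inv _ _ _ Hf Hn) as Hi.
  split; [|split];
  (eapply cd_eq; [apply (cd_mult (fun s => Cinv (f s))); eauto|]); reflexivity.
Qed.

Lemma cd_zero_snd F t D : (forall s, snd (F s) = 0) -> cd F t D -> snd D = 0.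
Proof. intros H [_ H2]. apply is_derive_ext with (g := fun _ => 0) in H2. 2: exact H.
  pose proof (isd_const 0 t) as H3. apply is_derive_unique in H2. apply is_derive_unique in H3.
  rewrite <- H2, H3. reflexivity. Qed.

Lemma Im0_RtoC z : Im z = 0 -> z = RtoC (Re z).
Proof. destruct z; unfold Im, Re, RtoC; simpl; intros ->; reflexivity. Qed.

Definition realE (e1 e2 e3 : C3) : Prop :=
  forall X Y, (X = e1 \/ X = e2 \/ X = e3) -> (Y = e1 \/ Y = e2 \/ Y = e3) -> Im (hform X Y) = 0.

Lemma real_hform e1 e2 e3 r1 r2 r3 s1 s2 s3 : realE e1 e2 e3 ->
  Im (hform (comb e1 e2 e3 r1 r2 r3) (comb e1 e2 e3 s1 s2 s3)) = 0.
Proof. intros H. rewrite hform_comb_im.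
  rewrite !H by tauto. ring. Qed.

Lemma hform_scale_l a X Y : hform (cscale a X) Y = Cmult a (hform X Y).
Proof. destruct a; dc3 X; dc3 Y. unfold hform, cscale, RtoC, Cplus, Cmult, Cconj; simpl. f_equal; ring. Qed.

Lemma C3_eq (X Y : C3) : Defs.c1 X = Defs.c1 Y -> Defs.c2 X = Defs.c2 Y -> Defs.c3 X = Defs.c3 Y -> X = Y.
Proof. destruct X, Y; simpl; intros -> -> ->; reflexivity. Qed.

Lemma Y_comb e1 e2 e3 N X l r1 r2 r3 n1 n2 n3 : realE e1 e2 e3 ->
  N = comb e1 e2 e3 n1 n2 n3 -> l <> RtoC 0 -> cscale l X = comb e1 e2 e3 r1 r2 r3 ->
  hform X N <> RtoC 0 ->
  exists y1 y2 y3, cscale (Cinv (hform X N)) X = comb e1 e2 e3 y1 y2 y3.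
Proof. intros HR HN Hl HX Hf.
  set (L := hform (comb e1 e2 e3 r1 r2 r3) N).
  assert (HL : L = RtoC (Re L)) by (apply Im0_RtoC; unfold L; rewrite HN; apply real_hform; auto).
  assert (HL2 : L = Cmult l (hform X N)) by (unfold L; rewrite <- HX, hform_scale_l; reflexivity).
  assert (HLn : Re L <> 0).
  { intro E. rewrite E in HL. rewrite HL in HL2. symmetry in HL2.
    apply Cmult_neq_0 in HL2; auto. }
  exists (r1 / Re L), (r2 / Re L), (r3 / Re L).
  assert (E1 := f_equal Defs.c1 HX). assert (E2 := f_equal Defs.c2 HX). assert (E3 := f_equal Defs.c3 HX).
  unfold cscale, comb in *; simpl in *.
  rewrite !RtoC_div by auto. rewrite <- HL, HL2.
  apply C3_eq; simpl.
  - transitivity (Cdiv (Cmult l (Defs.c1 X)) (Cmult l (hform X N))). field; auto. rewrite E1. field; auto.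
  - transitivity (Cdiv (Cmult l (Defs.c2 X)) (Cmult l (hform X N))). field; auto. rewrite E2. field; auto.
  - transitivity (Cdiv (Cmult l (Defs.c3 X)) (Cmult l (hform X N))). field; auto. rewrite E3. field; auto.
Qed.

Lemma Cmult_conj_self a : Cmult a (Cconj a) = RtoC (Re a ^ 2 + Im a ^ 2).
Proof. destruct a; unfold Cmult, Cconj, RtoC, Re, Im; simpl. f_equal; ring. Qed.

Lemma key_t e1 e2 e3 N n1 n2 n3 (c : R -> R3) t :
  det3 e1 e2 e3 <> RtoC 0 -> realE e1 e2 e3 -> N = comb e1 e2 e3 n1 n2 n3 ->
  (forall s, ex_derive (fun s => cx (c s)) s) -> (forall s, ex_derive (fun s => cy (c s)) s) ->
  (forall s, ex_derive (fun s => cu (c s)) s) ->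
  (forall s, exists l, l <> RtoC 0 /\ in_Rspan e1 e2 e3 (cscale l (lift (c s)))) ->
  (forall s, hform (lift (c s)) N <> RtoC 0) ->
  horizontal_at (c t) (velocity c t) /\
  Im (Cdiv (det3 (lift (c t)) (dlift (c t) (velocity c t)) N)
           (Cmult (Cmult (hform (lift (c t)) N) (hform (lift (c t)) N)) (det3 e1 e2 e3))) = 0.
Proof.
  intros Hd HR HN Hx Hy Hu Hsp Hf.
  set (X := fun s => lift (c s)).
  set (f := fun s => hform (X s) N).
  set (Xd := dlift (c t) (velocity c t)).
  assert (HX : cd3 X t Xd) by (apply lift_cd; auto).
  assert (Hfd : cd f t (hform Xd N)) by (apply cd_hform; auto).
  assert (Hft : f t <> RtoC 0) by apply Hf.
  set (a := Cinv (f t)). set (b := Copp (Cdiv (hform Xd N) (Cmult (f t) (f t)))).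
  set (Yd := Ydot a b (X t) Xd).
  assert (HY : cd3 (fun s => cscale (Cinv (f s)) (X s)) t Yd) by (apply cd_Y; auto).
  assert (HYc : forall s, exists y1 y2 y3, cscale (Cinv (f s)) (X s) = comb e1 e2 e3 y1 y2 y3).
  { intros s. destruct (Hsp s) as [l [Hl [r1 [r2 [r3 Hr]]]]]. eapply Y_comb; eauto. }
  set (de := det3 e1 e2 e3).
  assert (Hc1 : Im (Cmult (det3 Yd e2 e3) (Cinv de)) = 0).
  { apply (cd_zero_snd (fun s => Cmult (det3 (cscale (Cinv (f s)) (X s)) e2 e3) (Cinv de)) t).
    - intros s. destruct (HYc s) as [y1 [y2 [y3 E]]]. rewrite E.
      destruct (cr_comb e1 e2 e3 y1 y2 y3) as [E1 _]. rewrite E1.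
      replace (Cmult (Cmult (RtoC y1) (det3 e1 e2 e3)) (Cinv de)) with (RtoC y1) by (unfold de; field; auto).
      reflexivity.
    - eapply cd_eq. apply cd_mult. apply cd_det1; exact HY. apply cd_const. cbv beta; ring. }
  assert (Hc2 : Im (Cmult (det3 e1 Yd e3) (Cinv de)) = 0).
  { apply (cd_zero_snd (fun s => Cmult (det3 e1 (cscale (Cinv (f s)) (X s)) e3) (Cinv de)) t).
    - intros s. destruct (HYc s) as [y1 [y2 [y3 E]]]. rewrite E.
      destruct (cr_comb e1 e2 e3 y1 y2 y3) as [_ [E1 _]]. rewrite E1.
      replace (Cmult (Cmult (RtoC y2) (det3 e1 e2 e3)) (Cinv de)) with (RtoC y2) by (unfold de; field; auto).
      reflexivity.
    - eapply cd_eq. apply cd_mult. apply cd_det2; exact HY. apply cd_const. cbv beta; ring. }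
  assert (Hc3 : Im (Cmult (det3 e1 e2 Yd) (Cinv de)) = 0).
  { apply (cd_zero_snd (fun s => Cmult (det3 e1 e2 (cscale (Cinv (f s)) (X s))) (Cinv de)) t).
    - intros s. destruct (HYc s) as [y1 [y2 [y3 E]]]. rewrite E.
      destruct (cr_comb e1 e2 e3 y1 y2 y3) as [_ [_ E1]]. rewrite E1.
      replace (Cmult (Cmult (RtoC y3) (det3 e1 e2 e3)) (Cinv de)) with (RtoC y3) by (unfold de; field; auto).
      reflexivity.
    - eapply cd_eq. apply cd_mult. apply cd_det3; exact HY. apply cd_const. cbv beta; ring. }
  apply Im0_RtoC in Hc1, Hc2, Hc3.
  assert (HYd : Yd = comb e1 e2 e3 (Re (Cmult (det3 Yd e2 e3) (Cinv de)))
                         (Re (Cmult (det3 e1 Yd e3) (Cinv de))) (Re (Cmult (det3 e1 e2 Yd) (Cinv de)))).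
  { destruct (cramer e1 e2 e3 Yd) as [C1 [C2 C3']]. 
    apply C3_eq; unfold comb; cbn [Defs.c1 Defs.c2 Defs.c3]; rewrite <- Hc1, <- Hc2, <- Hc3.
    - transitivity (Cdiv (Cmult de (Defs.c1 Yd)) de). unfold de; field; auto. unfold de; rewrite C1; field; auto.
    - transitivity (Cdiv (Cmult de (Defs.c2 Yd)) de). unfold de; field; auto. unfold de; rewrite C2; field; auto.
    - transitivity (Cdiv (Cmult de (Defs.c3 Yd)) de). unfold de; field; auto. unfold de; rewrite C3'; field; auto. }
  destruct (HYc t) as [y1 [y2 [y3 HYt]]].
  split.
  - assert (Hi : Im (hform (cscale a (X t)) Yd) = 0).
    { unfold a. rewrite HYt, HYd. apply real_hform; auto. }
    unfold Yd, Ydot in Hi. rewrite hform_Y in Hi. unfold X in Hi. rewrite hform_lift_self in Hi.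
    rewrite Cmult_conj_self in Hi.
    replace (Cmult (Cmult a (Cconj b)) (RtoC 0)) with (RtoC 0) in Hi by ring.
    rewrite Cplus_0_l, im_scal_l in Hi.
    assert (Ha : a <> RtoC 0).
    { intro E. assert (E2 : Cmult (f t) a = RtoC 1) by (unfold a; apply Cinv_r; auto).
      rewrite E, Cmult_0_r in E2. apply C1_nz. rewrite <- E2. reflexivity. }
    pose proof (C_neq0 _ Ha) as Ha'.
    assert (Hpos : 0 < Re a ^ 2 + Im a ^ 2) by (unfold Re, Im; nra).
    assert (Hh : Im (hform (lift (c t)) Xd) = 0).
    { apply Rmult_integral in Hi. destruct Hi; [lra|auto]. }
    unfold Xd in Hh. rewrite im_h_lift_dlift in Hh. unfold horizontal_at. lra.
  - assert (HD : det3 (cscale a (X t)) Yd N = Cmult (Cmult a a) (det3 (X t) Xd N)) by (unfold Yd; apply det_alt).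
    assert (HD2 : det3 (cscale a (X t)) Yd N = Cmult (det3 (rv y1 (Re (Cmult (det3 Yd e2 e3) (Cinv de))) n1)
        (rv y2 (Re (Cmult (det3 e1 Yd e3) (Cinv de))) n2) (rv y3 (Re (Cmult (det3 e1 e2 Yd) (Cinv de))) n3)) de).
    { unfold a. rewrite HYt, HN. rewrite HYd at 1. apply det_comb. }
    rewrite det_rv_real in HD2.
    change (Im (Cdiv (det3 (X t) Xd N) (Cmult (Cmult (f t) (f t)) de)) = 0).
    assert (EQ : Cdiv (det3 (X t) Xd N) (Cmult (Cmult (f t) (f t)) de)
      = Cdiv (Cmult (Cmult a a) (det3 (X t) Xd N)) de).
    { unfold a, f, X, Xd, de in *. cbv beta in *. field; auto. }
    rewrite EQ.
    rewrite <- HD, HD2. unfold Cdiv. rewrite <- Cmult_assoc, Cinv_r, Cmult_1_r by auto. apply im_RtoC.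
Qed.

Lemma Cconj_neq0 z : z <> RtoC 0 -> Cconj z <> RtoC 0.
Proof. intros H E. apply H. rewrite <- (Cconj_conj z), E. unfold Cconj, RtoC; simpl. f_equal; ring. Qed.

Lemma Cmult3_eq0 a b c : a <> RtoC 0 -> b <> RtoC 0 -> Cmult (Cmult a b) c = RtoC 0 -> c = RtoC 0.
Proof. intros Ha Hb E. destruct (Ceq_dec c (RtoC 0)) as [|Hc]; auto.
  exfalso. revert E. apply Cmult_neq_0; auto. apply Cmult_neq_0; auto. Qed.

Lemma f_nonzero e1 e2 e3 (p q c : Hpt) lp lq lc rp1 rp2 rp3 rq1 rq2 rq3 rc1 rc2 rc3 s :
  realE e1 e2 e3 -> p <> q -> lp <> RtoC 0 -> lq <> RtoC 0 -> lc <> RtoC 0 ->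
  cscale lp (lift p) = comb e1 e2 e3 rp1 rp2 rp3 ->
  cscale lq (lift q) = comb e1 e2 e3 rq1 rq2 rq3 ->
  cscale lc (lift c) = comb e1 e2 e3 rc1 rc2 rc3 ->
  0 < s * Re (hform (comb e1 e2 e3 rp1 rp2 rp3) (comb e1 e2 e3 rq1 rq2 rq3)) ->
  hform (lift c) (comb e1 e2 e3 (rp1 + s * rq1) (rp2 + s * rq2) (rp3 + s * rq3)) <> RtoC 0.
Proof. intros HR Hpq Hlp Hlq Hlc HP HQ HC Hs E.
  set (al := hform (comb e1 e2 e3 rc1 rc2 rc3) (comb e1 e2 e3 rp1 rp2 rp3)).
  set (be := hform (comb e1 e2 e3 rq1 rq2 rq3) (comb e1 e2 e3 rc1 rc2 rc3)).
  set (de := hform (comb e1 e2 e3 rp1 rp2 rp3) (comb e1 e2 e3 rq1 rq2 rq3)).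
  assert (Ial : Im al = 0) by (apply real_hform; auto).
  assert (Ibe : Im be = 0) by (apply real_hform; auto).
  assert (Ide : Im de = 0) by (apply real_hform; auto).
  assert (Hsum : Cplus al (Cmult (RtoC s) (Cconj be)) = RtoC 0).
  { unfold al, be. rewrite <- hform_conj, <- hform_comb_add, <- HC, hform_scale_l, E. ring. }
  assert (Hsum' : Re al + s * Re be = 0).
  { apply (f_equal Re) in Hsum. revert Hsum. destruct al, be; unfold Re, Im, Cplus, Cmult, Cconj, RtoC in *; simpl in *.
    intros H; rewrite <- H. ring. }
  assert (Hprod : Re (Cmult (Cmult al de) be) = Re al * Re de * Re be).
  { destruct al, de, be; unfold Re, Im, Cmult in *; simpl in *. subst. ring. }
  assert (Hal : al = Cmult (Cmult lc (Cconj lp)) (hform (lift c) (lift p))) by (unfold al; rewrite <- HC, <- HP; apply hform_scale).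
  assert (Hbe : be = Cmult (Cmult lq (Cconj lc)) (hform (lift q) (lift c))) by (unfold be; rewrite <- HC, <- HQ; apply hform_scale).
  assert (Hde : de = Cmult (Cmult lp (Cconj lq)) (hform (lift p) (lift q))) by (unfold de; rewrite <- HP, <- HQ; apply hform_scale).
  assert (Hpos : 0 <= Re (Cmult (Cmult al de) be)).
  { rewrite Hal, Hbe, Hde.
    replace (Cmult (Cmult (Cmult (Cmult lc (Cconj lp)) (hform (lift c) (lift p))) (Cmult (Cmult lp (Cconj lq)) (hform (lift p) (lift q))))
                  (Cmult (Cmult lq (Cconj lc)) (hform (lift q) (lift c))))
     with (Cmult (Cmult (Cmult (Cmult lc (Cconj lc)) (Cmult lp (Cconj lp))) (Cmult lq (Cconj lq)))
                 (Cmult (Cmult (hform (lift c) (lift p)) (hform (lift p) (lift q))) (hform (lift q) (lift c)))) by ring.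
    rewrite !Cmult_conj_self, <- !RtoC_mult, re_scal_l, cartan.
    apply Rmult_le_pos. apply Rmult_le_pos. apply Rmult_le_pos. all: try nra. }
  rewrite Hprod in Hpos. fold de in Hs.
  assert (Hb0 : Re be = 0).
  { assert (Re al = - s * Re be) by lra. rewrite H in Hpos.
    assert (0 <= - (s * Re de) * (Re be * Re be)) by nra.
    assert (Re be * Re be <= 0) by nra. nra. }
  assert (Ha0 : Re al = 0) by nra.
  assert (Hbe0 : be = RtoC 0) by (rewrite (Im0_RtoC be Ibe), Hb0; reflexivity).
  assert (Hal0 : al = RtoC 0) by (rewrite (Im0_RtoC al Ial), Ha0; reflexivity).
  rewrite Hbe in Hbe0. rewrite Hal in Hal0.
  apply Cmult3_eq0 in Hbe0; auto; [|apply Cconj_neq0; auto].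
  apply Cmult3_eq0 in Hal0; auto; [|apply Cconj_neq0; auto].
  rewrite hl_rho in Hbe0, Hal0. apply rho_eq0 in Hbe0, Hal0. subst. auto.
Qed.

Lemma Cdiv_eq_mult X Y Z : Cdiv X Y = Z -> Y <> RtoC 0 -> X = Cmult Z Y.
Proof. intros <- H. field. auto. Qed.

Lemma Cconj_RtoC r : Cconj (RtoC r) = RtoC r.
Proof. unfold Cconj, RtoC; simpl. f_equal; ring. Qed.

Lemma ratio_inv (x y K : R) : 0 < K -> y <> 0 -> (K * x) / (K * y) = x / y.
Proof. intros. field. split; lra. Qed.

Lemma re_cmod_scale (K : R) w : 0 < K -> w <> RtoC 0 ->
  Re (Cmult (RtoC K) w) / Cmod (Cmult (RtoC K) w) = Re w / Cmod w.
Proof. intros HK Hw. rewrite re_scal_l, Cmod_mult, Cmod_R, Rabs_pos_eq by lra.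
  apply ratio_inv; auto. intro E; apply Hw, Cmod_eq_0, E. Qed.

Lemma re_cmod_conj w : Re (Cconj w) / Cmod (Cconj w) = Re w / Cmod w.
Proof. rewrite re_conj, Cmod_conj. reflexivity. Qed.

Lemma Cinv_neq0 z : z <> RtoC 0 -> Cinv z <> RtoC 0.
Proof. intros H E. assert (E2 : Cmult z (Cinv z) = RtoC 1) by (apply Cinv_r; auto).
  rewrite E, Cmult_0_r in E2. apply C1_nz. rewrite <- E2. reflexivity. Qed.

Lemma endpoint zp zq z0 lp lq rho D phi0 phi1 be s d lam mu :
  lp <> RtoC 0 -> lq <> RtoC 0 -> rho <> RtoC 0 -> D <> RtoC 0 -> zp <> RtoC 0 -> zq <> RtoC 0 -> z0 <> RtoC 0 ->
  0 < be -> 0 < lam -> 0 < mu -> 0 < phi0 * phi1 -> 0 < s * d ->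
  Cmult (Cmult lp (Cconj lq)) rho = RtoC d ->
  Cdiv (Cmult (Copp z0) (Cconj (Cmult (RtoC s) (Cmult (Cconj lq) rho))))
       (Cmult (Cmult (Cmult (RtoC s) (Cmult (Cconj lq) rho)) (Cmult (RtoC s) (Cmult (Cconj lq) rho))) D) = RtoC phi0 ->
  Cdiv (Cmult (Copp (Cmult (RtoC be) zq)) (Cconj (Cmult (Cconj lp) (Cconj rho))))
       (Cmult (Cmult (Cmult (Cconj lp) (Cconj rho)) (Cmult (Cconj lp) (Cconj rho))) D) = RtoC phi1 ->
  Re (Cmult zp (Cconj z0)) / Cmod (Cmult zp (Cconj z0)) =
  Re (Cdiv (Cmult (RtoC 2) (Cmult (Cmult (Cmult (RtoC lam) zp) (Cconj (Cmult (RtoC mu) zq))) (Cconj rho))) (Cmult rho rho)) /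
  Cmod (Cdiv (Cmult (RtoC 2) (Cmult (Cmult (Cmult (RtoC lam) zp) (Cconj (Cmult (RtoC mu) zq))) (Cconj rho))) (Cmult rho rho)).
Proof.
  intros Hlp Hlq Hr HD Hzp Hzq Hz0 Hbe Hlam Hmu Hphi Hsd Hd H0 H1.
  assert (Hs : s <> 0) by (intro; subst; lra).
  assert (Hdn : d <> 0) by (intro; subst; lra).
  assert (Hphi0 : phi0 <> 0) by (intro; subst; lra).
  assert (Hphi1 : phi1 <> 0) by (intro; subst; lra).
  pose proof (Cconj_neq0 _ Hlp) as Hlp'. pose proof (Cconj_neq0 _ Hlq) as Hlq'.
  pose proof (Cconj_neq0 _ Hr) as Hr'. pose proof (Cconj_neq0 _ Hzp) as Hzp'.
  repeat rewrite Cmult_conj in H0. repeat rewrite Cmult_conj in H1.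
  repeat rewrite Cconj_conj in H0. repeat rewrite Cconj_conj in H1.
  repeat rewrite Cconj_RtoC in H0. repeat rewrite Cconj_RtoC in H1.
  apply Cdiv_eq_mult in H0. 2:{ repeat apply Cmult_neq_0; auto; intro E; apply Hs; injection E; auto. }
  apply Cdiv_eq_mult in H1. 2:{ repeat apply Cmult_neq_0; auto. }
  assert (Ez0 : z0 = Cdiv (Copp (Cmult (RtoC phi0) (Cmult (Cmult (Cmult (RtoC s) (Cmult (Cconj lq) rho)) (Cmult (RtoC s) (Cmult (Cconj lq) rho))) D)))
                           (Cmult (RtoC s) (Cmult lq (Cconj rho)))).
  { rewrite <- H0. field. repeat split; auto. intro E; apply Hs; injection E; auto. }
  assert (Ezq : zq = Cdiv (Copp (Cmult (RtoC phi1) (Cmult (Cmult (Cmult (Cconj lp) (Cconj rho)) (Cmult (Cconj lp) (Cconj rho))) D)))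
                           (Cmult (RtoC be) (Cmult lp rho))).
  { rewrite <- H1. field. repeat split; auto. intro E. injection E; intros; lra. }
  assert (Hd' : Cmult (Cmult (Cconj lp) lq) (Cconj rho) = RtoC d).
  { rewrite <- (Cconj_RtoC d), <- Hd. rewrite !Cmult_conj, Cconj_conj. ring. }
  assert (Er' : Cconj rho = Cdiv (Cmult (Cmult lp (Cconj lq)) rho) (Cmult (Cconj lp) lq)).
  { rewrite Hd. rewrite <- Hd'. field. auto. }
  set (Lp := Re lp ^ 2 + Im lp ^ 2).
  assert (HLp : Cmult lp (Cconj lp) = RtoC Lp) by apply Cmult_conj_self.
  assert (HLp0 : 0 < Lp).
  { pose proof (C_neq0 _ Hlp). unfold Lp, Re, Im. nra. }
  set (Kr := be * phi0 / phi1 * s * d / (Lp * 2 * lam * mu)).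
  assert (HK : 0 < Kr).
  { unfold Kr. assert (0 < phi0 / phi1) by (apply Rmult_lt_reg_r with (phi1 * phi1); [nra|];
       unfold Rdiv; rewrite Rmult_0_l; replace (phi0 * / phi1 * (phi1 * phi1)) with (phi0 * phi1) by (field; auto); lra).
    replace (be * phi0 / phi1 * s * d / (Lp * 2 * lam * mu)) with ((be * (phi0 / phi1)) * (s * d) / (Lp * 2 * lam * mu)) by (field; repeat split; lra).
    apply Rdiv_lt_0_compat. apply Rmult_lt_0_compat; [apply Rmult_lt_0_compat|]; lra.
    repeat apply Rmult_lt_0_compat; lra. }
  set (Om := Cdiv (Cmult (RtoC 2) (Cmult (Cmult (Cmult (RtoC lam) zp) (Cconj (Cmult (RtoC mu) zq))) (Cconj rho))) (Cmult rho rho)).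
  assert (Ew : Cconj (Cmult zp (Cconj z0)) = Cmult (RtoC Kr) (Cconj Om)).
  { unfold Om. rewrite Cdiv_conj by (apply Cmult_neq_0; auto).
    repeat rewrite Cmult_conj. repeat rewrite Cconj_conj. repeat rewrite Cconj_RtoC.
    assert (EK : RtoC Kr = Cdiv (Cmult (Cmult (Cmult (RtoC be) (RtoC phi0)) (RtoC s)) (RtoC d))
       (Cmult (Cmult (Cmult (Cmult (RtoC phi1) (RtoC Lp)) (RtoC 2)) (RtoC lam)) (RtoC mu))).
    { unfold Kr, Cdiv, Cinv, Cmult, RtoC; simpl. f_equal; field; repeat split; lra. }
    rewrite EK, Ez0, Ezq, <- HLp, <- Hd, Er'. field.
    repeat split; auto. all: (intro E; injection E; intros E'; first [lra | (apply Hs; exact E') | (apply Hphi1; exact E')]). }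
  fold Om. rewrite <- (re_cmod_conj (Cmult zp (Cconj z0))), Ew, re_cmod_scale, re_cmod_conj; auto.
  apply Cconj_neq0. unfold Om, Cdiv.
  repeat first [ assumption | apply Cmult_neq_0 | apply Cconj_neq0 | apply Cinv_neq0 | (rewrite Cmult_conj) | (rewrite Cconj_RtoC) | (let E := fresh in intro E; injection E; intros; lra) ].
Qed.

Lemma sign_lt (phi : R -> R) a b : continuity phi -> (forall t, phi t <> 0) -> a < b -> 0 < phi a * phi b.
Proof. intros Hc Hn Hab.
  destruct (Rlt_or_le (phi a) 0) as [Ha|Ha]; destruct (Rlt_or_le (phi b) 0) as [Hb|Hb].
  - nra.
  - assert (Hb' : 0 < phi b) by (destruct Hb; auto; exfalso; apply (Hn b); auto).
    destruct (IVT phi a b Hc Hab Ha Hb') as [z [_ Hz]]. exfalso; apply (Hn z); auto.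
  - assert (Ha' : 0 < phi a) by (destruct Ha; auto; exfalso; apply (Hn a); auto).
    assert (Hc' : continuity (fun t => - phi t)) by (apply continuity_opp; auto).
    destruct (IVT (fun t => - phi t) a b Hc' Hab) as [z [_ Hz]]; try lra.
    exfalso; apply (Hn z); lra.
  - assert (Ha' : 0 < phi a) by (destruct Ha; auto; exfalso; apply (Hn a); auto).
    assert (Hb' : 0 < phi b) by (destruct Hb; auto; exfalso; apply (Hn b); auto). nra.
Qed.

Lemma sign_const (phi : R -> R) a b : (forall t, continuous phi t) -> (forall t, phi t <> 0) -> 0 < phi a * phi b.
Proof. intros Hc Hn.
  assert (Hc' : continuity phi) by (intro x; apply continuity_pt_filterlim; apply Hc).
  destruct (Rtotal_order a b) as [H|[H|H]].
  - apply sign_lt; auto.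
  - subst. pose proof (Hn b). assert (phi b * phi b > 0) by (apply Rsqr_pos_lt; auto). lra.
  - rewrite Rmult_comm. apply sign_lt; auto.
Qed.

Lemma hform_scale_r X b Y : hform X (cscale b Y) = Cmult (Cconj b) (hform X Y).
Proof. destruct b; dc3 X; dc3 Y. unfold hform, cscale, RtoC, Cplus, Cmult, Cconj; simpl. f_equal; ring. Qed.

Lemma Copp_neq0 z : z <> RtoC 0 -> Copp z <> RtoC 0.
Proof. intros H E. apply H. replace z with (Copp (Copp z)) by ring. rewrite E. ring. Qed.

Lemma horiz_nz p w : horizontal_at p w -> nonzero3 w -> ((cx w, cy w) : Complex.C) <> RtoC 0.
Proof. unfold horizontal_at, nonzero3. intros Hh Hn E. injection E; intros E2 E1. apply Hn.
  repeat split; auto. rewrite Hh, E1, E2. ring. Qed.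

Lemma smooth_ex (f : R -> R) : smooth f -> forall s, ex_derive f s.
Proof. intros H s. exact (H 1%nat s). Qed.

Lemma smooth_cd (f g : R -> R) t : smooth f -> smooth g ->
  cd (fun s => (Derive f s, Derive g s)) t (Derive (Derive f) t, Derive (Derive g) t).
Proof. intros Hf Hg. split; simpl.
  - apply Derive_correct. exact (Hf 2%nat t).
  - apply Derive_correct. exact (Hg 2%nat t).
Qed.

Lemma lhs_eq al v w : 0 < al -> ((cx v, cy v) : Complex.C) <> RtoC 0 -> ((cx w, cy w) : Complex.C) <> RtoC 0 ->
  hinner (scale3 al v) w / (sqrt (hinner (scale3 al v) (scale3 al v)) * sqrt (hinner w w)) =
  Re (Cmult (cx v, cy v) (Cconj (cx w, cy w))) / Cmod (Cmult (cx v, cy v) (Cconj (cx w, cy w))).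
Proof. intros Hal Hv Hw. rewrite Cmod_mult, Cmod_conj.
  pose proof (C_neq0 _ Hv) as Hv'. pose proof (C_neq0 _ Hw) as Hw'. simpl in Hv', Hw'.
  unfold hinner, scale3, Cmod, Re, Cmult, Cconj; simpl.
  replace (al * cx v * (al * cx v) + al * cy v * (al * cy v)) with ((al * al) * (cx v * cx v + cy v * cy v)) by ring.
  rewrite sqrt_mult_alt by nra. rewrite sqrt_square by lra.
  replace (cx v * (cx v * 1) + cy v * (cy v * 1)) with (cx v * cx v + cy v * cy v) by ring.
  replace (cx w * (cx w * 1) + cy w * (cy w * 1)) with (cx w * cx w + cy w * cy w) by ring.
  assert (0 < sqrt (cx v * cx v + cy v * cy v)) by (apply sqrt_lt_R0; nra).
  assert (0 < sqrt (cx w * cx w + cy w * cy w)) by (apply sqrt_lt_R0; nra).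
  field. repeat split; lra.
Qed.

Lemma scale_hvec p l v : horizontal_at p v -> scale3 l v = hvec p (l * cx v) (l * cy v).
Proof. unfold horizontal_at, scale3, hvec. intros H. destruct v as [a b u]; simpl in *. subst u. f_equal. field. Qed.

Lemma part2_core (gamma : R -> Hpt) T s0 s1 lam mu (G2 : Hpt -> Prop) (c : R -> Hpt) (v1 : R3) r0 r1 al be :
  legendrian_knot gamma T -> gamma s0 <> gamma s1 -> 0 < lam -> 0 < mu -> 0 < al ->
  v1 = scale3 al (velocity gamma s0) ->
  RcircleH G2 -> G2 (gamma s1) -> G2 (gamma s0) -> oriented_param G2 c ->
  c r1 = gamma s1 -> c r0 = gamma s0 -> 0 < be -> velocity c r1 = scale3 be (velocity gamma s1) ->
  abs_arg (OmegaH (gamma s0) (gamma s1) (scale3 lam (velocity gamma s0)) (scale3 mu (velocity gamma s1)))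
  = hangle v1 (velocity c r0).
Proof.
  intros HK Hpq Hlam Hmu Hal Hv1 [e1 [e2 [e3 [Hdet [HR Hiff]]]]] HGq HGp [[Hsx [Hsy Hsu]] [Hreg HcG]] Hcr1 Hcr0 Hbe Hv2.
  destruct HK as [_ [_ [_ [_ [Hkreg Hkhor]]]]].
  set (p := gamma s0) in *. set (q := gamma s1) in *.
  set (vp := velocity gamma s0) in *. set (vq := velocity gamma s1) in *.
  assert (Hvp : horizontal_at p vp) by apply Hkhor.
  assert (Hvq : horizontal_at q vq) by apply Hkhor.
  assert (HRe : realE e1 e2 e3) by exact HR.
  destruct (proj1 (Hiff p) HGp) as [lp [Hlp [rp1 [rp2 [rp3 HP]]]]].
  destruct (proj1 (Hiff q) HGq) as [lq [Hlq [rq1 [rq2 [rq3 HQ]]]]].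
  change (cscale lp (lift p) = comb e1 e2 e3 rp1 rp2 rp3) in HP.
  change (cscale lq (lift q) = comb e1 e2 e3 rq1 rq2 rq3) in HQ.
  set (rho := rhoH p q).
  assert (Hrho : rho <> RtoC 0) by (intro E; apply Hpq, rho_eq0, E).
  set (del := hform (comb e1 e2 e3 rp1 rp2 rp3) (comb e1 e2 e3 rq1 rq2 rq3)).
  assert (Hdel : del = Cmult (Cmult lp (Cconj lq)) rho).
  { unfold del. rewrite <- HP, <- HQ, hform_scale, hl_rho. reflexivity. }
  assert (Hdel0 : del <> RtoC 0) by (rewrite Hdel; repeat apply Cmult_neq_0; auto; apply Cconj_neq0; auto).
  set (d := Re del).
  assert (Hdd : del = RtoC d) by (apply Im0_RtoC; apply real_hform; auto).
  assert (Hd0 : d <> 0) by (intro E; apply Hdel0; rewrite Hdd, E; reflexivity).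
  set (sg := if Rlt_dec 0 d then 1 else -1).
  assert (Hsg : 0 < sg * d) by (unfold sg; destruct (Rlt_dec 0 d); lra).
  set (N := comb e1 e2 e3 (rp1 + sg * rq1) (rp2 + sg * rq2) (rp3 + sg * rq3)).
  set (fN := fun t => hform (lift (c t)) N).
  assert (HfN : forall t, fN t <> RtoC 0).
  { intros t. destruct (proj1 (Hiff (c t)) (HcG t)) as [lc [Hlc [rc1 [rc2 [rc3 HC]]]]].
    change (cscale lc (lift (c t)) = comb e1 e2 e3 rc1 rc2 rc3) in HC.
    unfold fN, N. apply (f_nonzero e1 e2 e3 p q (c t) lp lq lc rp1 rp2 rp3 rq1 rq2 rq3 rc1 rc2 rc3 sg); auto. }
  assert (Hex : forall (f : R -> R), smooth f -> forall s, ex_derive f s) by (intros; apply smooth_ex; auto).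
  assert (Hkey : forall t, horizontal_at (c t) (velocity c t) /\
     Im (Cdiv (det3 (lift (c t)) (dlift (c t) (velocity c t)) N)
           (Cmult (Cmult (hform (lift (c t)) N) (hform (lift (c t)) N)) (det3 e1 e2 e3))) = 0).
  { intros t. eapply key_t; eauto. reflexivity. intros s. apply Hiff. apply HcG. }
  set (de := det3 e1 e2 e3).
  set (zeta := fun t => ((Derive (fun s => cx (c s)) t, Derive (fun s => cy (c s)) t) : Complex.C)).
  set (g := fun t => Cdiv (Cmult (Copp (zeta t)) (Cconj (fN t))) (Cmult (Cmult (fN t) (fN t)) de)).
  assert (Hg : forall t, g t = Cdiv (det3 (lift (c t)) (dlift (c t) (velocity c t)) N)
           (Cmult (Cmult (hform (lift (c t)) N) (hform (lift (c t)) N)) (det3 e1 e2 e3))).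
  { intros t. unfold g, fN, de. rewrite det_lift_dlift by apply (Hkey t). reflexivity. }
  assert (Hgim : forall t, Im (g t) = 0) by (intros t; rewrite Hg; apply Hkey).
  assert (Hzeta : forall t, zeta t <> RtoC 0) by (intros t; change (((cx (velocity c t), cy (velocity c t)) : Complex.C) <> RtoC 0); apply (horiz_nz (c t)); [apply Hkey | apply Hreg]).
  assert (Hgnz : forall t, g t <> RtoC 0).
  { intros t. unfold g, Cdiv.
    repeat first [ apply Cmult_neq_0 | apply Cconj_neq0 | apply Cinv_neq0 | apply HfN | apply Hzeta | exact Hdet ].
    apply Copp_neq0; apply Hzeta. }
  set (phi := fun t => Re (g t)).
  assert (Hphin : forall t, phi t <> 0).
  { intros t E. apply (Hgnz t). rewrite (Im0_RtoC _ (Hgim t)). unfold phi in E. rewrite E. reflexivity. }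
  assert (Hphic : forall t, continuous phi t).
  { intros t. assert (HfNd : cd fN t (hform (dlift (c t) (velocity c t)) N)).
    { apply cd_hform. apply lift_cd; apply Hex; auto. }
    assert (Hzd := smooth_cd (fun s => cx (c s)) (fun s => cy (c s)) t Hsx Hsy).
    eapply cd_cont. unfold g. apply cd_div.
    - apply cd_mult. apply cd_opp. exact Hzd. apply cd_conj. exact HfNd.
    - apply cd_mult. apply cd_mult; exact HfNd. apply cd_const.
    - apply Cmult_neq_0; [apply Cmult_neq_0; apply HfN | exact Hdet]. }
  assert (Hsign := sign_const phi r0 r1 Hphic Hphin).
  set (w := velocity c r0).
  assert (Hw : horizontal_at p w) by (unfold w; rewrite <- Hcr0; apply Hkey).
  assert (Hwnz : ((cx w, cy w) : Complex.C) <> RtoC 0) by (apply (horiz_nz p); auto; apply Hreg).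
  assert (Hvpnz : ((cx vp, cy vp) : Complex.C) <> RtoC 0) by (apply (horiz_nz p); auto; apply Hkreg).
  assert (Hvqnz : ((cx vq, cy vq) : Complex.C) <> RtoC 0) by (apply (horiz_nz q); auto; apply Hkreg).
  rewrite (scale_hvec p lam vp Hvp), (scale_hvec q mu vq Hvq), Omega_formula by auto.
  unfold abs_arg, hangle. f_equal. rewrite Hv1, lhs_eq by auto.
  assert (HfNp : fN r0 = Cmult (RtoC sg) (Cmult (Cconj lq) rho)).
  { unfold fN, N. rewrite Hcr0. fold p. rewrite hform_comb_add, <- HP, <- HQ, !hform_scale_r, hform_lift_self, hl_rho.
    fold rho. ring. }
  assert (HfNq : fN r1 = Cmult (Cconj lp) (Cconj rho)).
  { unfold fN, N. rewrite Hcr1. fold q. rewrite hform_comb_add, <- HP, <- HQ, !hform_scale_r, hform_lift_self.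
    rewrite (hform_conj (lift p) (lift q)), hl_rho. fold rho. ring. }
  assert (H0 : g r0 = RtoC (phi r0)) by apply Im0_RtoC, Hgim.
  assert (H1 : g r1 = RtoC (phi r1)) by apply Im0_RtoC, Hgim.
  unfold g in H0, H1. rewrite HfNp in H0. rewrite HfNq in H1.
  assert (Hz1 : zeta r1 = Cmult (RtoC be) (cx vq, cy vq)).
  { unfold zeta. change (((cx (velocity c r1), cy (velocity c r1)) : Complex.C) = Cmult (RtoC be) (cx vq, cy vq)).
    rewrite Hv2. unfold scale3, Cmult, RtoC; simpl. f_equal; ring. }
  rewrite Hz1 in H1. change (zeta r0) with ((cx w, cy w) : Complex.C) in H0.
  assert (Hom : Omf p q (lam * cx vp) (lam * cy vp) (mu * cx vq) (mu * cy vq) =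
     Cdiv (Cmult (RtoC 2) (Cmult (Cmult (Cmult (RtoC lam) (cx vp, cy vp)) (Cconj (Cmult (RtoC mu) (cx vq, cy vq)))) (Cconj rho))) (Cmult rho rho)).
  { unfold Omf. fold rho. f_equal. f_equal. f_equal. f_equal.
    - unfold Cmult, RtoC; simpl. f_equal; ring.
    - f_equal. unfold Cmult, RtoC; simpl. f_equal; ring. }
  rewrite Hom.
  symmetry. apply (endpoint _ _ _ lp lq rho de (phi r0) (phi r1) be sg d lam mu); auto.
  rewrite <- Hdel. exact Hdd.
Qed.

Theorem proposition6p2 :
  (* Part 1 *)
  (forall (p q : Hpt) (a b a' b' : R), p <> q ->
     Cmod (OmegaH p q (hvec p a b) (hvec q a' b'))
     = 2 * (hnorm2 a b * hnorm2 a' b') / (dH p q ^ 2))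
  /\
  (* Part 2: K = gamma(R) a Legendrian knot (oriented by gamma), p = gamma s0,
     q = gamma s1 distinct, v, v' positively tangent to K at p, q;
     G1 = Gamma_K(p,q) an R-circle through p, q tangent to K at p, oriented by K at p;
     G2 = Gamma_K(q,p) an R-circle through q, p tangent to K at q, oriented by K at q;
     theta_K(p,q) = angle at p between the oriented G1 and G2. *)
  (forall (gamma : R -> Hpt) (T s0 s1 lam mu : R)
          (G1 G2 : Hpt -> Prop) (c1 c2 : R -> Hpt) (t0 r0 r1 al be : R),
     legendrian_knot gamma T ->
     gamma s0 <> gamma s1 ->
     0 < lam -> 0 < mu ->
     RcircleH G1 -> G1 (gamma s0) -> G1 (gamma s1) ->
     oriented_param G1 c1 -> c1 t0 = gamma s0 ->
     0 < al -> velocity c1 t0 = scale3 al (velocity gamma s0) ->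
     RcircleH G2 -> G2 (gamma s1) -> G2 (gamma s0) ->
     oriented_param G2 c2 -> c2 r1 = gamma s1 -> c2 r0 = gamma s0 ->
     0 < be -> velocity c2 r1 = scale3 be (velocity gamma s1) ->
     abs_arg (OmegaH (gamma s0) (gamma s1)
                           (scale3 lam (velocity gamma s0))
                           (scale3 mu (velocity gamma s1)))
     = hangle (velocity c1 t0) (velocity c2 r0)).
Proof.
  split.
  - intros p q a b a' b' H. apply part1; auto.
  - intros gamma T s0 s1 lam mu G1 G2 c1 c2 t0 r0 r1 al be HK Hne Hlam Hmu HG1 HG1p HG1q Hc1 Hc1t Hal Hv1
      HG2 HG2q HG2p Hc2 Hc2r1 Hc2r0 Hbe Hv2.
    apply (part2_core gamma T s0 s1 lam mu G2 c2 (velocity c1 t0) r0 r1 al be); auto.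
Qed.
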